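(* Assume the quantities $\overline{P}^c_e(t)$ and $\overline{P}^d_e(t)$ defined in the context are positive for all $t=1,\ldots,T$ (e.g. if $\underline{S}<s_0<\overline{S}$). Then for every $t\in\{1,\ldots,T\}$ and every $\overline{\tau}\in\{0,\ldots,T-t\}$ the linear inequalities $$\sum_{\tau=0}^{\overline{\tau}}\Big(p^c_{t+\tau}+\overline{\rho}^c(t,\tau,\overline{\tau})\,p^d_{t+\tau}\Big)\le\sum_{\tau=0}^{\overline{\tau}}c(t,\tau),\qquad(\mathrm{VIc})$$ $$\sum_{\tau=0}^{\overline{\tau}}\Big(p^d_{t+\tau}+\overline{\rho}^d(t,\tau,\overline{\tau})\,p^c_{t+\tau}\Big)\le\sum_{\tau=0}^{\overline{\tau}}d(t,\tau)\qquad(\mathrm{VId})$$ are satisfied by every $(p^d,p^c,s)\in\mathcal{P}$.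
   Context: Let $T\ge1$ be an integer, $\Delta>0$, $\eta_c,\eta_d\in(0,1]$, $\overline{P}^d,\overline{P}^c>0$, $\underline{S}<\overline{S}$, and a given initial state of charge $s_0\in[\underline{S},\overline{S}]$. The storage feasible set $\mathcal{P}$ is the set of $(p^d,p^c,s)\in\mathbb{R}^T_{\ge0}\times\mathbb{R}^T_{\ge0}\times\mathbb{R}^T_{\ge0}$ with $p^d_t\le\overline{P}^d$, $p^c_t\le\overline{P}^c$, $\underline{S}\le s_t\le\overline{S}$, $s_t=s_{t-1}+\Delta(\eta_cp^c_t-p^d_t/\eta_d)$ for $t=1,\ldots,T$, and $p^d_tp^c_t=0$ for all $t$. Let $\overline{P}^d_e=\min\{\overline{P}^d,\eta_d(\overline{S}-\underline{S})/\Delta\}$, $\overline{P}^c_e=\min\{\overline{P}^c,(\overline{S}-\underline{S})/(\Delta\eta_c)\}$, and $[x]^+=\max\{x,0\}$. Set $\underline{s}_0(0)=\overline{s}_0(0)=s_0$ and for $t=1,\ldots,T-1$: $\underline{s}_0(t)=\max\{\underline{s}_0(t-1)-\Delta\overline{P}^d_e/\eta_d,\ \underline{S}\}$, $\overline{s}_0(t)=\min\{\overline{s}_0(t-1)+\Delta\eta_c\overline{P}^c_e,\ \overline{S}\}$. For $t=1,\ldots,T$, $\overline{\tau}=0,\ldots,T-t$: $c(t,\overline{\tau})=\min\{\overline{P}^c_e,\ [(\overline{S}-\underline{s}_0(t-1))/(\Delta\eta_c)-\overline{\tau}\,\overline{P}^c_e]^+\}$, $d(t,\overline{\tau})=\min\{\overline{P}^d_e,\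 [(\overline{s}_0(t-1)-\underline{S})\eta_d/\Delta-\overline{\tau}\,\overline{P}^d_e]^+\}$. For $\tau=0,\ldots,T-2$: $\overline{c}(\tau)=\min\{\overline{P}^c_e,[(\overline{S}-\underline{S})/(\Delta\eta_c)-\tau\overline{P}^c_e]^+\}$, $\overline{d}(\tau)=\min\{\overline{P}^d_e,[(\overline{S}-\underline{S})\eta_d/\Delta-\tau\overline{P}^d_e]^+\}$. For $t=1,\ldots,T$: $\overline{P}^c_e(t)=c(t,0)$, $\overline{P}^d_e(t)=d(t,0)$. For $t=1,\ldots,T$, $\overline{\tau}=0,\ldots,T-t$, $\tau=0,\ldots,\overline{\tau}$: $\rho^c(t,\tau,\overline{\tau})=\max\{-\overline{P}^d_e(t+\tau)/(\eta_d\eta_c),\ \sum_{j=\tau}^{\overline{\tau}}c(t,j)-\sum_{j=0}^{\overline{\tau}-\tau-1}\overline{c}(j)\}$, $\rho^d(t,\tau,\overline{\tau})=\max\{-\eta_d\eta_c\overline{P}^c_e(t+\tau),\ \sum_{j=\tau}^{\overline{\tau}}d(t,j)-\sum_{j=0}^{\overline{\tau}-\tau-1}\overline{d}(j)\}$ (empty sums are $0$); $\overline{\rho}^c(t,\tau,\overline{\tau})=-1/(\eta_d\eta_c)$ if $\rho^c(t,\tau,\overline{\tau})\le0$ and $=\rho^c(t,\tau,\overline{\tau})/\overline{P}^d_e(t+\tau)$ otherwise; $\overline{\rho}^d(t,\tau,\overline{\tau})=-\eta_d\eta_c$ if $\rho^d(t,\tau,\overline{\tau})\le0$ and $=\rho^d(t,\tau,\overline{\tau})/\overline{P}^c_e(t+\tau)$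 otherwise. *)

(* Defs.v *)
From mathcomp Require Import all_boot all_order all_algebra.
Set Implicit Arguments. Unset Strict Implicit. Unset Printing Implicit Defensive.
Import Order.TTheory GRing.Theory Num.Theory.
Local Open Scope ring_scope.

Record params (R : realFieldType) := Params {
  Delta : R; eta_c : R; eta_d : R; Pdmax : R; Pcmax : R;
  Smin : R; Smax : R; s0 : R }.

Section Storage.
Variable R : realFieldType.
Variable p : params R.
Local Notation Delta := (Delta p).
Local Notation eta_c := (eta_c p).
Local Notation eta_d := (eta_d p).
Local Notation Pdmax := (Pdmax p).
Local Notation Pcmax := (Pcmax p).
Local Notation Smin := (Smin p).
Local Notation Smax := (Smax p).
Local Notation s0 := (s0 p).

Definition pos (x : R) : R := Num.max x 0.

Definition PdE : R := Num.min Pdmax (eta_d * (Smax - Smin) / Delta).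
Definition PcE : R := Num.min Pcmax ((Smax - Smin) / (Delta * eta_c)).

Fixpoint slo (t : nat) : R :=
  match t with
  | 0%N => s0
  | t'.+1 => Num.max (slo t' - Delta * PdE / eta_d) Smin
  end.
Fixpoint shi (t : nat) : R :=
  match t with
  | 0%N => s0
  | t'.+1 => Num.min (shi t' + Delta * eta_c * PcE) Smax
  end.

Definition cc (t taub : nat) : R :=
  Num.min PcE (pos ((Smax - slo t.-1) / (Delta * eta_c) - taub%:R * PcE)).
Definition dd (t taub : nat) : R :=
  Num.min PdE (pos ((shi t.-1 - Smin) * eta_d / Delta - taub%:R * PdE)).

Definition cbar (tau : nat) : R :=
  Num.min PcE (pos ((Smax - Smin) / (Delta * eta_c) - tau%:R * PcE)).
Definition dbar (tau : nat) : R :=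
  Num.min PdE (pos ((Smax - Smin) * eta_d / Delta - tau%:R * PdE)).

Definition PcEt (t : nat) : R := cc t 0.
Definition PdEt (t : nat) : R := dd t 0.

Definition rhoc (t tau taub : nat) : R :=
  Num.max (- PdEt (t + tau) / (eta_d * eta_c))
    (\sum_(tau <= j < taub.+1) cc t j - \sum_(0 <= j < taub - tau) cbar j).
Definition rhod (t tau taub : nat) : R :=
  Num.max (- (eta_d * eta_c * PcEt (t + tau)))
    (\sum_(tau <= j < taub.+1) dd t j - \sum_(0 <= j < taub - tau) dbar j).

Definition rhocbar (t tau taub : nat) : R :=
  if rhoc t tau taub <= 0 then - (1 / (eta_d * eta_c))
  else rhoc t tau taub / PdEt (t + tau).
Definition rhodbar (t tau taub : nat) : R :=
  if rhod t tau taub <= 0 then - (eta_d * eta_c)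
  else rhod t tau taub / PcEt (t + tau).

Definition feasible (T : nat) (pd pc s : nat -> R) : Prop :=
  s 0%N = s0 /\
  forall t : nat, (1 <= t <= T)%N ->
    (0 <= pd t /\ pd t <= Pdmax) /\ (0 <= pc t /\ pc t <= Pcmax) /\
    (0 <= s t /\ Smin <= s t /\ s t <= Smax) /\
    s t = s t.-1 + Delta * (eta_c * pc t - pd t / eta_d) /\
    pd t * pc t = 0.

End Storage.

(* Main.v *)
Require Import Defs.
From mathcomp Require Import all_boot all_order all_algebra.
From mathcomp Require Import lra ring zify.
Import Order.TTheory GRing.Theory Num.Theory.
Local Open Scope ring_scope.

Ltac splitmax := repeat match goal with
  | |- context[Order.max ?a ?b] => rewrite (maxEle a b); let H := fresh "H" in
      case: (boolP (a <= b)) => H; [|rewrite -ltNge in H]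
  end.
Ltac splitmin := repeat match goal with
  | |- context[Order.min ?a ?b] => rewrite (minEle a b); let H := fresh "H" in
      case: (boolP (a <= b)) => H; [|rewrite -ltNge in H]
  end.
Ltac mm := rewrite /pos; splitmax; splitmin; try lra.

Section Key.
Variable R : realFieldType.

Lemma stair (P C : R) n : 0 <= P ->
  \sum_(0 <= j < n) Num.min P (pos (C - j%:R * P)) = Num.min (n%:R * P) (pos C).
Proof.
move=> hP; elim: n C => [|n IH] C.
  rewrite big_geq // mul0r; mm.
rewrite big_nat_recl //.
have -> : \sum_(0 <= i < n) Num.min P (pos (C - i.+1%:R * P)) =
          \sum_(0 <= i < n) Num.min P (pos ((C - P) - i%:R * P)).
  apply: eq_big_nat => i _; rewrite -addn1 natrD; congr (Num.min _ (pos _)); ring.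
rewrite IH !mulr_natl mulrS mulr0n subr0.
have : 0 <= P *+ n by rewrite mulrn_wge0.
move: (P *+ n) => X hX; mm.
Qed.

Lemma minpos_le (P a b : R) : a <= b -> Num.min P (pos a) <= Num.min P (pos b).
Proof. move=> h; mm. Qed.

Lemma key m (P C U k : R) (x y Q L rb c cb : nat -> R) :
  0 < P -> C <= U -> 0 <= k ->
  (forall j, c j = Num.min P (pos (C - j%:R * P))) ->
  (forall j, cb j = Num.min P (pos (U - j%:R * P))) ->
  (forall tau, (tau <= m)%N -> 0 <= x tau /\ x tau <= P /\ 0 <= y tau /\
      y tau <= Q tau /\ 0 < Q tau /\ x tau * y tau = 0 /\ L tau <= 0) ->
  (forall tau, (tau <= m)%N -> rb tau =
     if Num.max (L tau) (\sum_(tau <= j < m.+1) c j - \sum_(0 <= j < m - tau) cb j) <= 0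
     then - k
     else Num.max (L tau) (\sum_(tau <= j < m.+1) c j - \sum_(0 <= j < m - tau) cb j) / Q tau) ->
  \sum_(0 <= tau < m.+1) (x tau - k * y tau) <= C ->
  \sum_(0 <= tau < m.+1) (x tau + rb tau * y tau) <= \sum_(0 <= tau < m.+1) c tau.
Proof.
move=> hP hCU hk hc hcb hxy hrb hE.
have c0 j : 0 <= c j by rewrite hc; mm.
have cmP : c m <= P by rewrite hc; mm.
have Sle tau : (tau <= m)%N ->
    \sum_(tau <= j < m.+1) c j - \sum_(0 <= j < m - tau) cb j <= c m.
  move=> htm; rewrite big_nat_recr //= -{1}(add0n tau) big_addn.
  suff : \sum_(0 <= i < m - tau) c (i + tau)%N <= \sum_(0 <= i < m - tau) cb i by lra.
  apply: ler_sum_nat => i _; rewrite hc hcb; apply: minpos_le.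
  rewrite natrD mulrDl.
  have : 0 <= tau%:R * P by rewrite mulr_ge0 // ltW.
  lra.
have hsum : \sum_(0 <= tau < m.+1) c tau = Num.min (m.+1%:R * P) (pos C).
  rewrite -stair ?ltW //; exact: eq_big_nat.
case: (leP (c m) 0) => hcm.
  have rbE tau : (tau <= m)%N -> rb tau = - k.
    move=> htm; rewrite hrb // ifT //; rewrite ge_max.
    have [_ [_ [_ [_ [_ [_ ->]]]]]] := hxy _ htm.
    by rewrite /= (le_trans (Sle _ htm)).
  rewrite (eq_big_nat _ _ (F2 := fun tau => x tau - k * y tau)); last first.
    by move=> i /andP[_ hi]; rewrite rbE // mulNr.
  apply: (le_trans hE); rewrite hsum.
  move: hcm; rewrite hc !mulr_natl mulrS.
  have : 0 <= P *+ m by rewrite mulrn_wge0 // ltW.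
  move: (P *+ m) => X hX; mm.
have hCm : 0 < C - m%:R * P by move: hcm; rewrite hc; mm.
have cP j : (j < m)%N -> c j = P.
  move=> hj; rewrite hc.
  have : j.+1%:R * P <= m%:R * P by rewrite ler_pM2r // ler_nat.
  rewrite -addn1 natrD mulrDl mul1r => h; mm.
have cbP j : (j < m)%N -> cb j = P.
  move=> hj; rewrite hcb.
  have : j.+1%:R * P <= m%:R * P by rewrite ler_pM2r // ler_nat.
  rewrite -addn1 natrD mulrDl mul1r => h; mm.
have rbE tau : (tau <= m)%N -> rb tau = c m / Q tau.
  move=> htm; have [_ [_ [_ [_ [_ [_ hL]]]]]] := hxy _ htm.
  have Seq : \sum_(tau <= j < m.+1) c j - \sum_(0 <= j < m - tau) cb j = c m.
    rewrite big_nat_recr //= -{1}(add0n tau) big_addn.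
    rewrite (eq_big_nat _ _ (F2 := cb)); first by rewrite addrAC subrr add0r.
    move=> i /andP[_ hi]; rewrite cP ?cbP //; lia.
  rewrite hrb // Seq (max_idPr (le_trans hL (ltW hcm))) ifN //; by rewrite -ltNge.
rewrite (eq_big_nat _ _ (F2 := fun tau => x tau + c m / Q tau * y tau)); last first.
  by move=> i /andP[_ hi]; rewrite rbE.
have hsum2 : \sum_(0 <= tau < m.+1) c tau = P *+ m + c m.
  rewrite big_nat_recr //= (eq_big_nat _ _ (F2 := fun _ => P)); last first.
    by move=> i /andP[_ hi]; rewrite cP.
  by rewrite sumr_const_nat subn0.
rewrite hsum2.
have fle tau : (tau <= m)%N -> x tau + c m / Q tau * y tau <= P /\
    (0 < y tau -> x tau + c m / Q tau * y tau <= c m).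
  move=> htm; have [hx0 [hxP [hy0 [hyQ [hQ [hxy0 _]]]]]] := hxy _ htm.
  have hyQ1 : y tau / Q tau <= 1 by rewrite ler_pdivrMr // mul1r.
  have h1 : c m / Q tau * y tau = c m * (y tau / Q tau) by rewrite mulrAC mulrA.
  have h2 : c m * (y tau / Q tau) <= c m by rewrite ler_piMr // ?ltW // divr_ge0 // ltW.
  move/eqP: hxy0; rewrite mulf_eq0 => /orP[] /eqP hz.
    by rewrite hz h1; split => *; lra.
  by rewrite hz mulr0 addr0; split => // ?; lra.
case: (boolP (has (fun tau => 0 < y tau) (iota 0 m.+1))).
  move/hasP => [t0]; rewrite mem_iota add0n /= => ht0 hy0.
  rewrite (big_cat_nat _ (n := t0)) //=; last exact: ltnW.
  rewrite big_nat_recl //.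
  have A : \sum_(0 <= i < t0) (x i + c m / Q i * y i) <= P *+ t0.
    apply: (@le_trans _ _ (\sum_(0 <= i < t0) P)); last by rewrite sumr_const_nat subn0.
    apply: ler_sum_nat => i /andP[_ hi].
    by case: (fle i _) => //; rewrite ltnW // (leq_trans hi).
  have B : \sum_(t0 <= i < m) (x i.+1 + c m / Q i.+1 * y i.+1) <= P *+ (m - t0).
    rewrite -sumr_const_nat; apply: ler_sum_nat => i /andP[_ hi].
    by case: (fle i.+1 _).
  have C0 := (fle t0 ht0).2 hy0.
  have : P *+ m = P *+ t0 + P *+ (m - t0) by rewrite -mulrnDr subnKC.
  lra.
move/hasPn => hno.
have y0 tau : (tau <= m)%N -> y tau = 0.
  move=> htm; have [_ [_ [hy0 _]]] := hxy _ htm.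
  have := hno tau; rewrite mem_iota add0n ltnS htm /= => /(_ isT).
  rewrite -leNgt => h; lra.
rewrite (eq_big_nat _ _ (F2 := x)); last by move=> i /andP[_ hi]; rewrite y0 // mulr0 addr0.
rewrite (eq_big_nat _ _ (F2 := x)) in hE; last by move=> i /andP[_ hi]; rewrite y0 // mulr0 subr0.
have hxP : \sum_(0 <= tau < m.+1) x tau <= P *+ m.+1.
  apply: (@le_trans _ _ (\sum_(0 <= i < m.+1) P)); last by rewrite sumr_const_nat subn0.
  apply: ler_sum_nat => i /andP[_ hi].
  by have [_ [? _]] := hxy i hi.
move: hcm hCm hxP; rewrite hc mulrS -mulr_natl.
have : 0 <= m%:R * P by rewrite mulr_ge0 // ltW.
move: (m%:R * P) => X hX; mm.
Qed.
End Key.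

Lemma tele (R : realFieldType) (F g : nat -> R) (a : R) (t m : nat) :
  (1 <= t)%N ->
  (forall tau, (tau <= m)%N -> F tau = (g (t + tau)%N - g (t + tau).-1) * a) ->
  \sum_(0 <= tau < m.+1) F tau = (g (t + m)%N - g t.-1) * a.
Proof.
move=> ht; elim: m => [|m IH] hF.
  by rewrite big_nat1 hF // addn0.
rewrite big_nat_recr //= IH; last by move=> tau htau; apply: hF; rewrite ltnW.
rewrite hF // addnS /=; ring.
Qed.

Theorem theorem1 (R : realFieldType) (T : nat) (p : params R) :
  (1 <= T)%N -> 0 < Delta p ->
  0 < eta_c p -> eta_c p <= 1 -> 0 < eta_d p -> eta_d p <= 1 ->
  0 < Pdmax p -> 0 < Pcmax p -> Smin p < Smax p ->
  Smin p <= s0 p -> s0 p <= Smax p ->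
  (forall t : nat, (1 <= t <= T)%N -> 0 < PcEt p t /\ 0 < PdEt p t) ->
  forall pd pc s : nat -> R,
  feasible p T pd pc s ->
  forall t taub : nat, (1 <= t <= T)%N -> (taub <= T - t)%N ->
    \sum_(0 <= tau < taub.+1)
       (pc (t + tau)%N + rhocbar p t tau taub * pd (t + tau)%N)
      <= \sum_(0 <= tau < taub.+1) cc p t tau
    /\
    \sum_(0 <= tau < taub.+1)
       (pd (t + tau)%N + rhodbar p t tau taub * pc (t + tau)%N)
      <= \sum_(0 <= tau < taub.+1) dd p t tau.
Proof.
move=> hT hD hc0 hc1 hd0 hd1 hPd hPc hS hs0l hs0u hpos pd pc s [hs0 hf] t taub ht htb.
have hDc : 0 < (Delta p) * (eta_c p) by rewrite mulr_gt0.
have hdc : 0 < (eta_d p) * (eta_c p) by rewrite mulr_gt0.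
have sb k : (k <= T)%N -> Smin p <= s k /\ s k <= Smax p.
  case: k => [|k] hk; first by rewrite hs0.
  by have [_ [_ [[_ [? ?]] _]]] := hf k.+1 hk.
have pdb k : (1 <= k <= T)%N -> 0 <= pd k /\ pd k * (Delta p) <= (s k.-1 - Smin p) * (eta_d p).
  move=> hk; have [[hp0 _] [[hq0 _] [[_ [hl _]] [hst hz]]]] := hf k hk.
  split => //.
  have [hl' _] : Smin p <= s k.-1 /\ _ := sb k.-1 (leq_trans (leq_pred k) (andP hk).2).
  move/eqP: hz; rewrite mulf_eq0 => /orP[] /eqP hz.
    rewrite hz mul0r; apply: mulr_ge0; [lra|exact: ltW].
  rewrite hst hz mulr0 sub0r in hl.
  have -> : pd k * (Delta p) = ((Delta p) * (pd k / (eta_d p))) * (eta_d p) by field; rewrite gt_eqF.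
  apply: ler_wpM2r; [exact: ltW|lra].
have pcb k : (1 <= k <= T)%N -> 0 <= pc k /\ pc k * ((Delta p) * (eta_c p)) <= Smax p - s k.-1.
  move=> hk; have [[hp0 _] [[hq0 _] [[_ [_ hu]] [hst hz]]]] := hf k hk.
  split => //.
  have [_ hu'] : _ /\ s k.-1 <= Smax p := sb k.-1 (leq_trans (leq_pred k) (andP hk).2).
  move/eqP: hz; rewrite mulf_eq0 => /orP[] /eqP hz.
    rewrite hst hz mul0r subr0 in hu.
    have -> : pc k * ((Delta p) * (eta_c p)) = (Delta p) * ((eta_c p) * pc k) by ring.
    lra.
  rewrite hz mul0r; lra.
have pdE k : (1 <= k <= T)%N -> pd k <= PdE p.
  move=> hk; rewrite /PdE le_min; have [[_ ->] _] := hf k hk; rewrite /=.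
  have [_ h] := pdb k hk.
  have [_ hu'] : _ /\ s k.-1 <= Smax p := sb k.-1 (leq_trans (leq_pred k) (andP hk).2).
  rewrite ler_pdivlMr //.
  have : (s k.-1 - Smin p) * (eta_d p) <= (Smax p - Smin p) * (eta_d p) by rewrite ler_pM2r //; lra.
  rewrite [(eta_d p) * _]mulrC; lra.
have pcE k : (1 <= k <= T)%N -> pc k <= PcE p.
  move=> hk; rewrite /PcE le_min; have [_ [[_ ->] _]] := hf k hk; rewrite /=.
  have [_ h] := pcb k hk.
  have [hl' _] : Smin p <= s k.-1 /\ _ := sb k.-1 (leq_trans (leq_pred k) (andP hk).2).
  rewrite ler_pdivlMr //; lra.
have PdE0 : 0 <= PdE p.
  rewrite /PdE le_min (ltW hPd) /=; apply: divr_ge0; [apply: mulr_ge0; lra | exact: ltW].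
have PcE0 : 0 <= PcE p.
  rewrite /PcE le_min (ltW hPc) /=; apply: divr_ge0; [lra | exact: ltW].
have reach k : (k <= T)%N -> slo p k <= s k /\ s k <= shi p k.
  elim: k => [|k IH] hk; first by rewrite /= hs0.
  have [IH1 IH2] := IH (ltnW hk).
  have hk1 : (1 <= k.+1 <= T)%N by rewrite hk.
  have [[hp0 _] [[hq0 _] [[_ [hl hu]] [hst _]]]] := hf _ hk1.
  have e1 : s k.+1 = s k + ((Delta p) * ((eta_c p) * pc k.+1) - (Delta p) * pd k.+1 / (eta_d p)) by rewrite hst; ring.
  have a1 : 0 <= (Delta p) * ((eta_c p) * pc k.+1) by apply: mulr_ge0; [exact: ltW | apply: mulr_ge0; [exact: ltW|]].
  have a2 : (Delta p) * pd k.+1 / (eta_d p) <= (Delta p) * PdE p / (eta_d p).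
    by rewrite ler_pM2r ?invr_gt0 // ler_pM2l // pdE.
  have a3 : (Delta p) * (eta_c p) * pc k.+1 <= (Delta p) * (eta_c p) * PcE p by rewrite ler_pM2l // pcE.
  have a4 : 0 <= (Delta p) * pd k.+1 / (eta_d p) by apply: mulr_ge0; [apply: mulr_ge0; [exact: ltW|] | rewrite invr_ge0; exact: ltW].
  rewrite /= ge_max le_min hl hu !andbT e1; rewrite -mulrA in a3; split.
    clear -IH1 a1 a2; lra.
  clear -IH2 a3 a4; lra.
have sloS k : Smin p <= slo p k by case: k => [|k] //=; rewrite le_max lexx orbT.
have shiS k : shi p k <= Smax p by case: k => [|k] //=; rewrite ge_min lexx orbT.
have hT1 : (t + taub <= T)%N by move: ht htb; clear; lia.
have [ht1 htT] := andP ht.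
have hrange tau : (tau <= taub)%N -> (1 <= t + tau <= T)%N by move=> htau; move: ht htb htau; clear; lia.
have [sl _] := reach t.-1 (leq_trans (leq_pred t) htT).
have [_ sh] := reach t.-1 (leq_trans (leq_pred t) htT).
have [sel seu] := sb _ hT1.
split.
- apply: (@key R taub (PcE p) ((Smax p - slo p t.-1) / ((Delta p) * (eta_c p)))
     ((Smax p - Smin p) / ((Delta p) * (eta_c p))) (1 / ((eta_d p) * (eta_c p)))
     (fun tau => pc (t + tau)%N) (fun tau => pd (t + tau)%N)
     (fun tau => PdEt p (t + tau)) (fun tau => - PdEt p (t + tau) / ((eta_d p) * (eta_c p)))
     (fun tau => rhocbar p t tau taub) (cc p t) (cbar p)).
  + by have [+ _] := hpos t ht; rewrite /PcEt /cc lt_min => /andP[].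
  + rewrite ler_pM2r ?invr_gt0 //; move: (sloS t.-1); clear; move=> h; lra.
  + by rewrite divr_ge0 // ltW.
  + by [].
  + by [].
  + move=> tau htau; have hr := hrange tau htau.
    have [hq0 _] := pcb _ hr; have [hp0 hpb] := pdb _ hr.
    have [_ hQ] := hpos _ hr.
    have [_ [_ [_ [_ hz]]]] := hf _ hr.
    split => //; split; first exact: pcE.
    split => //; split.
      rewrite /PdEt /dd le_min pdE //= mul0r subr0 /pos le_max; apply/orP; left.
      rewrite ler_pdivlMr //.
      have [_ h2] := reach (t + tau).-1 (leq_trans (leq_pred _) (andP hr).2).
      apply: (le_trans hpb); rewrite ler_pM2r //; lra.
    split => //; split; first by rewrite mulrC.
    by rewrite mulNr oppr_le0 divr_ge0 // ltW.
  + by [].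
  + have -> : \sum_(0 <= tau < taub.+1) (pc (t + tau)%N - 1 / ((eta_d p) * (eta_c p)) * pd (t + tau)%N)
        = (s (t + taub)%N - s t.-1) * ((Delta p) * (eta_c p))^-1.
      apply: tele => // tau htau; have hr := hrange tau htau.
      have [_ [_ [_ [hst _]]]] := hf _ hr; rewrite hst; field.
      by rewrite !gt_eqF.
    rewrite ler_pM2r ?invr_gt0 //; lra.
- apply: (@key R taub (PdE p) ((shi p t.-1 - Smin p) * (eta_d p) / (Delta p))
     ((Smax p - Smin p) * (eta_d p) / (Delta p)) ((eta_d p) * (eta_c p))
     (fun tau => pd (t + tau)%N) (fun tau => pc (t + tau)%N)
     (fun tau => PcEt p (t + tau)) (fun tau => - ((eta_d p) * (eta_c p) * PcEt p (t + tau)))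
     (fun tau => rhodbar p t tau taub) (dd p t) (dbar p)).
  + by have [_ +] := hpos t ht; rewrite /PdEt /dd lt_min => /andP[].
  + rewrite ler_pM2r ?invr_gt0 // ler_pM2r //; move: (shiS t.-1); clear; move=> h; lra.
  + by rewrite ltW.
  + by [].
  + by [].
  + move=> tau htau; have hr := hrange tau htau.
    have [hq0 hqb] := pcb _ hr; have [hp0 _] := pdb _ hr.
    have [hQ _] := hpos _ hr.
    have [_ [_ [_ [_ hz]]]] := hf _ hr.
    split => //; split; first exact: pdE.
    split => //; split.
      rewrite /PcEt /cc le_min pcE //= mul0r subr0 /pos le_max; apply/orP; left.
      rewrite ler_pdivlMr //.
      have [h2 _] := reach (t + tau).-1 (leq_trans (leq_pred _) (andP hr).2).
      apply: (le_trans hqb); lra.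
    split => //; split => //.
    by rewrite oppr_le0 mulr_ge0 // ltW.
  + by [].
  + have -> : \sum_(0 <= tau < taub.+1) (pd (t + tau)%N - (eta_d p) * (eta_c p) * pc (t + tau)%N)
        = ((- s (t + taub)%N) - (- s t.-1)) * ((eta_d p) / (Delta p)).
      apply: (@tele _ _ (fun k => - s k)) => // tau htau; have hr := hrange tau htau.
      have [_ [_ [_ [hst _]]]] := hf _ hr; rewrite hst; field.
      by rewrite !gt_eqF.
    rewrite mulrA ler_pM2r ?invr_gt0 // ler_pM2r //; lra.
Qed.
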